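(* $\mathsf{LC}$ is $\mathsf{TNNIL}$-conservative over $\mathsf{LLe}^+$: for every $A\in\mathsf{TNNIL}$, if $\mathsf{LC}\vdash A$ then $\mathsf{LLe}^+\vdash A$.
   Context: Modal language: propositional variables, $\bot$, $\wedge,\vee,\to$, $\Box$; atomic = variables and $\bot$; $\boxdot A:=A\wedge\Box A$. $\mathsf{iK4}$: intuitionistic propositional logic in the modal language plus $\Box(A\to B)\to(\Box A\to\Box B)$ and $\Box A\to\Box\Box A$, closed under modus ponens and necessitation; $\mathsf{iGL}$: $\mathsf{iK4}$ plus Löb's axiom $\Box(\Box A\to A)\to\Box A$. $\mathsf{LC}:=\mathsf{iGL}+\{A\to\Box A\}$ (completeness principle for all $A$). $\mathsf{NOI}$: propositions in which every $\to$ lies in the scope of a $\Box$. Leivant's translation: $A^l=A$ for atomic/boxed $A$; $(A\wedge B)^l=A^l\wedge B^l$; $(A\vee B)^l=\boxdot A^l\vee\boxdot B^l$; $(A\to B)^l=A\to B^l$ if $A\in\mathsf{NOI}$, else $A\to B$. $\mathsf{LLe}^+:=\mathsf{iGL}+\{\Box A\to\Box A^l\}+\{p\to\Box p: p\text{ atomic}\}$. $\mathsf{TNNIL}$: smallest class containing atomic propositions, closed under $\wedge,\vee,\Box$, and containing $A\to B$ whenever $A,B\in\mathsf{TNNIL}$ and $A\in\mathsf{NOI}$. *)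

(* Defs.v *)
Inductive form : Type :=
| Var : nat -> form
| Bot : form
| And : form -> form -> form
| Or  : form -> form -> form
| Imp : form -> form -> form
| Box : form -> form.

Definition atomic (A : form) : Prop :=
  match A with Var _ | Bot => True | _ => False end.

Definition boxdot (A : form) : form := And A (Box A).

Fixpoint noib (A : form) : bool :=
  match A with
  | Var _ | Bot => true
  | And B C | Or B C => andb (noib B) (noib C)
  | Imp _ _ => false
  | Box _ => true
  end.

Definition NOI (A : form) : Prop := noib A = true.

Fixpoint leivant (A : form) : form :=
  match A with
  | Var n => Var n
  | Bot => Bot
  | Box B => Box B
  | And B C => And (leivant B) (leivant C)
  | Or B C => Or (boxdot (leivant B)) (boxdot (leivant C))
  | Imp B C => if noib B then Imp B (leivant C) else Imp B C
  end.

Inductive TNNIL : form -> Prop :=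
| TNNIL_var : forall n, TNNIL (Var n)
| TNNIL_bot : TNNIL Bot
| TNNIL_and : forall A B, TNNIL A -> TNNIL B -> TNNIL (And A B)
| TNNIL_or  : forall A B, TNNIL A -> TNNIL B -> TNNIL (Or A B)
| TNNIL_box : forall A, TNNIL A -> TNNIL (Box A)
| TNNIL_imp : forall A B, TNNIL A -> TNNIL B -> NOI A -> TNNIL (Imp A B).

Inductive iGL_prf (X : form -> Prop) : form -> Prop :=
| ax_k  : forall A B, iGL_prf X (Imp A (Imp B A))
| ax_s  : forall A B C,
    iGL_prf X (Imp (Imp A (Imp B C)) (Imp (Imp A B) (Imp A C)))
| ax_and1 : forall A B, iGL_prf X (Imp (And A B) A)
| ax_and2 : forall A B, iGL_prf X (Imp (And A B) B)
| ax_andI : forall A B, iGL_prf X (Imp A (Imp B (And A B)))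
| ax_or1 : forall A B, iGL_prf X (Imp A (Or A B))
| ax_or2 : forall A B, iGL_prf X (Imp B (Or A B))
| ax_orE : forall A B C,
    iGL_prf X (Imp (Imp A C) (Imp (Imp B C) (Imp (Or A B) C)))
| ax_efq : forall A, iGL_prf X (Imp Bot A)
| ax_K : forall A B, iGL_prf X (Imp (Box (Imp A B)) (Imp (Box A) (Box B)))
| ax_4 : forall A, iGL_prf X (Imp (Box A) (Box (Box A)))
| ax_L : forall A, iGL_prf X (Imp (Box (Imp (Box A) A)) (Box A))
| ax_extra : forall A, X A -> iGL_prf X A
| r_mp : forall A B, iGL_prf X (Imp A B) -> iGL_prf X A -> iGL_prf X B
| r_nec : forall A, iGL_prf X A -> iGL_prf X (Box A).

Definition iGL_thm (A : form) : Prop := iGL_prf (fun _ => False) A.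

Definition LC_ax (A : form) : Prop := exists B, A = Imp B (Box B).
Definition LC_thm (A : form) : Prop := iGL_prf LC_ax A.

Definition LLe_plus_ax (A : form) : Prop :=
  (exists B, A = Imp (Box B) (Box (leivant B))) \/
  (exists p, atomic p /\ A = Imp p (Box p)).
Definition LLe_plus_thm (A : form) : Prop := iGL_prf LLe_plus_ax A.

(* Main.v *)
Require Import Defs.
From Stdlib Require Import List Bool.
Import ListNotations.

Definition pr (A : form) : Prop := iGL_prf LLe_plus_ax A.

Inductive nd (G : list form) : form -> Prop :=
| nd_thm : forall A, pr A -> nd G A
| nd_hyp : forall A, In A G -> nd G A
| nd_mp : forall A B, nd G (Imp A B) -> nd G A -> nd G B.

Lemma pr_I A : pr (Imp A A).
Proof.
  exact (r_mp _ _ _ (r_mp _ _ _ (ax_s _ A (Imp A A) A) (ax_k _ A (Imp A A))) (ax_k _ A A)).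
Qed.

Lemma ded G A B : nd (A :: G) B -> nd G (Imp A B).
Proof.
  intro H; induction H.
  - apply nd_mp with A0; [apply nd_thm, ax_k | now apply nd_thm].
  - destruct H as [<-|H].
    + apply nd_thm, pr_I.
    + apply nd_mp with A0; [apply nd_thm, ax_k | now apply nd_hyp].
  - apply nd_mp with (Imp A A0); [|exact IHnd2].
    apply nd_mp with (Imp A (Imp A0 B)); [apply nd_thm, ax_s | exact IHnd1].
Qed.

Lemma weaken G A : nd G A -> forall G', (forall x, In x G -> In x G') -> nd G' A.
Proof.
  induction 1; intros G' HG.
  - now apply nd_thm.
  - apply nd_hyp; auto.
  - eapply nd_mp; eauto.
Qed.

Lemma cut G' A : nd G' A -> forall G, (forall x, In x G' -> nd G x) -> nd G A.
Proof.
  induction 1; intros G0 HG.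
  - now apply nd_thm.
  - auto.
  - eapply nd_mp; eauto.
Qed.

Lemma nd_pr A : nd [] A -> pr A.
Proof.
  induction 1.
  - assumption.
  - destruct H.
  - eapply r_mp; eauto.
Qed.

Lemma box_map G Y : nd G Y -> nd (map Box G) (Box Y).
Proof.
  revert Y; induction G as [|x G IH]; intros Y H.
  - apply nd_thm, r_nec, nd_pr, H.
  - apply ded in H. apply IH in H.
    apply nd_mp with (Box x); [|apply nd_hyp; simpl; auto].
    apply nd_mp with (Box (Imp x Y)); [apply nd_thm, ax_K|].
    eapply weaken; [exact H|]. simpl; auto.
Qed.

Lemma box_use L Z G : nd L Z -> (forall x, In x L -> nd G (Box x)) -> nd G (Box Z).
Proof.
  intros H HL. apply box_map in H. eapply cut; [exact H|].
  intros y Hy. apply in_map_iff in Hy. destruct Hy as [x [<- Hx]]. auto.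
Qed.

Lemma use G A B : pr (Imp A B) -> nd G A -> nd G B.
Proof. intros H1 H2. apply nd_mp with A; [now apply nd_thm | exact H2]. Qed.

Lemma from_nd A B : nd [A] B -> pr (Imp A B).
Proof. intro H. apply nd_pr, ded, H. Qed.

Lemma andE1 G A B : nd G (And A B) -> nd G A.
Proof. apply use, ax_and1. Qed.
Lemma andE2 G A B : nd G (And A B) -> nd G B.
Proof. apply use, ax_and2. Qed.
Lemma andI G A B : nd G A -> nd G B -> nd G (And A B).
Proof. intros. apply nd_mp with B; auto. apply nd_mp with A; auto. apply nd_thm, ax_andI. Qed.
Lemma orI1 G A B : nd G A -> nd G (Or A B).
Proof. apply use, ax_or1. Qed.
Lemma orI2 G A B : nd G B -> nd G (Or A B).
Proof. apply use, ax_or2. Qed.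
Lemma orE G A B C : nd G (Or A B) -> nd (A :: G) C -> nd (B :: G) C -> nd G C.
Proof.
  intros H HA HB. apply ded in HA. apply ded in HB.
  apply nd_mp with (Or A B); auto.
  apply nd_mp with (Imp B C); auto.
  apply nd_mp with (Imp A C); auto. apply nd_thm, ax_orE.
Qed.
Lemma efq G A : nd G Bot -> nd G A.
Proof. apply use, ax_efq. Qed.

Ltac hyp := apply nd_hyp; simpl; unfold boxdot;
  repeat (first [left; reflexivity | right]).

Lemma box_mono G A B : pr (Imp A B) -> nd G (Box A) -> nd G (Box B).
Proof.
  intros H1 H2. apply (box_use [A]); [apply (use _ _ _ H1); hyp|].
  intros x [<-|[]]; exact H2.
Qed.

Lemma bd_box G X : nd G (Box X) -> nd G (Box (boxdot X)).
Proof.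
  intro H. apply (box_use [X; Box X]); [apply andI; hyp|].
  intros x [<-|[<-|[]]]; [exact H | apply (use _ _ _ (ax_4 _ _) H)].
Qed.

Fixpoint tr (A : form) : form :=
  match A with
  | Var n => Var n
  | Bot => Bot
  | And a b => And (tr a) (tr b)
  | Or a b => Or (tr a) (tr b)
  | Imp a b => boxdot (Imp (tr a) (tr b))
  | Box a => Box (tr a)
  end.

Lemma pers_pr A : pr (Imp (tr A) (Box (tr A))).
Proof.
  induction A; simpl.
  - apply ax_extra. right. exists (Var n). simpl; auto.
  - apply ax_extra. right. exists Bot. simpl; auto.
  - apply from_nd. apply (box_use [tr A1; tr A2]).
    + apply andI; hyp.
    + intros x [<-|[<-|[]]].
      * apply (use _ _ _ IHA1). apply andE1 with (tr A2). hyp.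
      * apply (use _ _ _ IHA2). apply andE2 with (tr A1). hyp.
  - apply from_nd. apply orE with (tr A1) (tr A2); [hyp| |].
    + apply box_mono with (tr A1); [apply ax_or1|]. apply (use _ _ _ IHA1); hyp.
    + apply box_mono with (tr A2); [apply ax_or2|]. apply (use _ _ _ IHA2); hyp.
  - apply from_nd. apply bd_box. apply andE2 with (Imp (tr A1) (tr A2)). hyp.
  - apply ax_4.
Qed.

Lemma trI L a b : nd (map tr (a :: L)) (tr b) -> nd (map tr L) (tr (Imp a b)).
Proof.
  intro H. simpl in H. apply ded in H. simpl. unfold boxdot. apply andI; [exact H|].
  apply (box_use (map tr L)); [exact H|].
  intros x Hx. apply in_map_iff in Hx. destruct Hx as [y [<- Hy]].
  apply (use _ _ _ (pers_pr y)). apply nd_hyp. apply in_map. exact Hy.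
Qed.

Lemma trE G a b : nd G (tr (Imp a b)) -> nd G (tr a) -> nd G (tr b).
Proof.
  intros H1 H2. simpl in H1. apply nd_mp with (tr a); [|exact H2].
  exact (andE1 _ _ _ H1).
Qed.

Ltac tI := match goal with
  | |- nd (map tr ?L) _ => apply (trI L)
  | |- nd [] _ => apply (trI [])
  end.

Lemma main A : LC_thm A -> nd [] (tr A).
Proof.
  unfold LC_thm. induction 1.
  - tI. tI. hyp.
  - tI. tI. tI. apply (trE _ B). apply (trE _ A); hyp.
    apply (trE _ A); hyp.
  - tI. apply andE1 with (tr B). hyp.
  - tI. apply andE2 with (tr A). hyp.
  - tI. tI. apply andI; hyp.
  - tI. apply orI1. hyp.
  - tI. apply orI2. hyp.
  - tI. tI. tI. apply orE with (tr A) (tr B); [hyp| |].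
    + apply (trE _ A); hyp.
    + apply (trE _ B); hyp.
  - tI. apply efq. hyp.
  - tI. tI. apply (box_use [tr A; tr (Imp A B)]).
    + apply (trE _ A); hyp.
    + intros x [<-|[<-|[]]]; hyp.
  - tI. apply nd_mp with (Box (tr A)); [apply nd_thm, ax_4 | hyp].
  - tI. apply nd_mp with (Box (Imp (Box (tr A)) (tr A))); [apply nd_thm, ax_L|].
    apply (box_use [tr (Imp (Box A) A)]).
    + apply andE1 with (Box (Imp (Box (tr A)) (tr A))). hyp.
    + intros x [<-|[]]; hyp.
  - destruct H as [B ->]. tI. apply (use _ _ _ (pers_pr B)). hyp.
  - exact (trE _ _ _ IHiGL_prf1 IHiGL_prf2).
  - apply nd_thm, r_nec, nd_pr, IHiGL_prf.
Qed.

Lemma leiv_ax G D : nd G (Box D) -> nd G (Box (leivant D)).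
Proof. apply use. apply ax_extra. left. exists D. reflexivity. Qed.

Lemma boxQ G D : pr (Imp (boxdot (leivant D)) (tr D)) -> nd G (Box D) -> nd G (Box (tr D)).
Proof.
  intros Q H. apply leiv_ax in H. apply bd_box in H.
  exact (box_mono _ _ _ Q H).
Qed.

Lemma second C : TNNIL C ->
  pr (Imp (boxdot (leivant C)) (tr C)) /\ pr (Imp (tr C) C) /\
  (NOI C -> pr (Imp C (tr C))).
Proof.
  induction 1.
  - split; [|split]; [| apply pr_I | intros; apply pr_I].
    apply from_nd. apply andE1 with (Box (Var n)). hyp.
  - split; [|split]; [| apply pr_I | intros; apply pr_I].
    apply from_nd. apply andE1 with (Box Bot). hyp.
  - destruct IHTNNIL1 as [Q1 [R1 N1]]. destruct IHTNNIL2 as [Q2 [R2 N2]].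
    split; [|split].
    + apply from_nd. simpl. apply andI.
      * apply (use _ _ _ Q1). apply andI.
        -- apply andE1 with (leivant B). apply andE1 with (Box (And (leivant A) (leivant B))). hyp.
        -- apply box_mono with (And (leivant A) (leivant B)); [apply ax_and1|].
           apply andE2 with (And (leivant A) (leivant B)). hyp.
      * apply (use _ _ _ Q2). apply andI.
        -- apply andE2 with (leivant A). apply andE1 with (Box (And (leivant A) (leivant B))). hyp.
        -- apply box_mono with (And (leivant A) (leivant B)); [apply ax_and2|].
           apply andE2 with (And (leivant A) (leivant B)). hyp.
    + apply from_nd. simpl. apply andI.
      * apply (use _ _ _ R1). apply andE1 with (tr B). hyp.
      * apply (use _ _ _ R2). apply andE2 with (tr A). hyp.
    + intro HN. unfold NOI in HN. simpl in HN. apply andb_true_iff in HN.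
      destruct HN as [HA HB].
      apply from_nd. simpl. apply andI.
      * apply (use _ _ _ (N1 HA)). apply andE1 with B. hyp.
      * apply (use _ _ _ (N2 HB)). apply andE2 with A. hyp.
  - destruct IHTNNIL1 as [Q1 [R1 N1]]. destruct IHTNNIL2 as [Q2 [R2 N2]].
    split; [|split].
    + apply from_nd. simpl.
      apply orE with (boxdot (leivant A)) (boxdot (leivant B)).
      * apply andE1 with (Box (Or (boxdot (leivant A)) (boxdot (leivant B)))). hyp.
      * apply orI1. apply (use _ _ _ Q1). hyp.
      * apply orI2. apply (use _ _ _ Q2). hyp.
    + apply from_nd. simpl. apply orE with (tr A) (tr B); [hyp| |].
      * apply orI1. apply (use _ _ _ R1). hyp.
      * apply orI2. apply (use _ _ _ R2). hyp.
    + intro HN. unfold NOI in HN. simpl in HN. apply andb_true_iff in HN.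
      destruct HN as [HA HB].
      apply from_nd. simpl. apply orE with A B; [hyp| |].
      * apply orI1. apply (use _ _ _ (N1 HA)). hyp.
      * apply orI2. apply (use _ _ _ (N2 HB)). hyp.
  - destruct IHTNNIL as [Q [R N]]. split; [|split].
    + apply from_nd. simpl. apply boxQ; [exact Q|].
      apply andE1 with (Box (Box A)). hyp.
    + apply from_nd. simpl. apply box_mono with (tr A); [exact R|]. hyp.
    + intros _. apply from_nd. simpl. apply boxQ; [exact Q|]. hyp.
  - destruct IHTNNIL1 as [QA [RA NA]]. destruct IHTNNIL2 as [QB [RB NB]].
    assert (HL : leivant (Imp A B) = Imp A (leivant B)).
    { simpl. unfold NOI in H1. rewrite H1. reflexivity. }
    assert (F0 : pr (Imp (boxdot (Imp A (leivant B))) (Imp (tr A) (tr B)))).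
    { apply from_nd. apply ded.
      assert (hA : nd [tr A; boxdot (Imp A (leivant B))] A) by (apply (use _ _ _ RA); hyp).
      assert (hbD : nd [tr A; boxdot (Imp A (leivant B))] (Box A)).
      { apply box_mono with (tr A); [exact RA|]. apply (use _ _ _ (pers_pr A)). hyp. }
      apply (use _ _ _ QB). apply andI.
      - apply nd_mp with A; [|exact hA].
        apply andE1 with (Box (Imp A (leivant B))). hyp.
      - apply nd_mp with (Box A); [|exact hbD].
        apply nd_mp with (Box (Imp A (leivant B))); [apply nd_thm, ax_K|].
        apply andE2 with (Imp A (leivant B)). hyp. }
    split; [|split].
    + rewrite HL. apply from_nd. simpl. unfold boxdot at 1. apply andI.
      * apply (use _ _ _ F0). hyp.
      * apply box_mono with (boxdot (Imp A (leivant B))); [exact F0|].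
        apply bd_box. apply andE2 with (Imp A (leivant B)). hyp.
    + apply from_nd. simpl. apply ded. apply (use _ _ _ RB).
      apply nd_mp with (tr A).
      * apply andE1 with (Box (Imp (tr A) (tr B))). hyp.
      * apply (use _ _ _ (NA H1)). hyp.
    + intro HN. unfold NOI in HN. simpl in HN. discriminate.
Qed.

Theorem theorem4p23 : forall A : form, TNNIL A -> LC_thm A -> LLe_plus_thm A.
Proof.
  intros A HT HL.
  destruct (second A HT) as [_ [R _]].
  exact (r_mp _ _ _ R (nd_pr _ (main A HL))).
Qed.
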